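(* Let $M$ be an ordinal monoid with merge. For every $a\in M$ there exists an FO-approximant of $\pi$ from $a^{+}$ to $\mathrm{Cl}^{+}_{\sharp}(\{a\})$, where $a^{+}\subseteq M^{\mathrm{ord}}$ is the set of finite nonempty words all of whose letters are $a$.
   Context: Countable ordinal words over $\Sigma$: maps $w\colon\alpha\to\Sigma$, $\alpha$ a countable ordinal; $\Sigma^{\mathrm{ord}}$ their set. An ordinal monoid: set $M$ with $\pi\colon M^{\mathrm{ord}}\to M$, $\pi(x)=x$ on one-letter words, generalised associativity; $1=\pi(\varepsilon)$, $x\cdot y=\pi(xy)$, $x^\omega=\pi(xxx\cdots)$; ordered by $\le$ if $u\le v$ letterwise implies $\pi(u)\le\pi(v)$. $x^!$ idempotent power, $x^{!+k}$ eventual value of $x^{n!+k}$ in a finite semigroup. Ordinal monoid with merge: $(M,1,\le,\cdot,-^\omega,-^\sharp)$, $M$ finite, $(M,1,\le,\cdot,-^\omega)$ the presentation of an ordered finite ordinal monoid, $-^\sharp$ monotone with $a^{!+k}\le a^\sharp$, $(a^!)^\sharp=a^!$, $a^\sharp a^\sharp=(a^\sharp)^\sharp=a^\sharp$, $(ab)^\sharp=a(ba)^\sharp b$. $\mathrm{Cl}^{+}_{\sharp}(A)$ is the closure of $A$ under $\cdot$ and $-^\sharp$. FO logic over alphabet $M$ (atoms $x<y$, $a(x)$); FO-definable languages and maps (preimages FO-definable). For FO-definable $L\subseteq M^{\mathrm{ord}}$, an FO-approximant of $\pi$ over $L$ is an FO-definable $\rho\colon L\to M$ with $\pi(u)\le\rho(u)$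 for all $u\in L$; it is ''from $L$ to $Y$'' if its values lie in $Y\subseteq M$. *)

(* Defs.v *)
From mathcomp Require Import all_boot.
From Stdlib Require Import Cantor.
Set Implicit Arguments.
Unset Strict Implicit.
Unset Printing Implicit Defensive.

(* A countable ordinal word over A is presented by a set of positions  *)
(* dom \subseteq nat, a strict well-ordering lt of dom, and labels.    *)
(* (Every countable ordinal is the order type of such a well-order.)   *)
(* Words are considered up to isomorphism (see [oword_iso]).           *)
Record oword (A : Type) := OWord {
  odom : nat -> Prop;
  olt  : nat -> nat -> Prop;
  olab : nat -> A }.

Definition wf_oword (A : Type) (u : oword A) : Prop :=
  (forall p, odom u p -> ~ olt u p p) /\
  (forall p q r, odom u p -> odom u q -> odom u r ->
      olt u p q -> olt u q r -> olt u p r) /\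
  (forall p q, odom u p -> odom u q -> p = q \/ olt u p q \/ olt u q p) /\
  well_founded (fun p q => odom u p /\ odom u q /\ olt u p q).

Definition oword_iso (A : Type) (u v : oword A) : Prop :=
  exists f : nat -> nat,
    (forall p, odom u p -> odom v (f p)) /\
    (forall q, odom v q -> exists p, odom u p /\ f p = q) /\
    (forall p q, odom u p -> odom u q -> (olt u p q <-> olt v (f p) (f q))) /\
    (forall p, odom u p -> olab v (f p) = olab u p).

Definition empty_word (A : Type) (x0 : A) : oword A :=
  OWord (fun _ => False) (fun _ _ => False) (fun _ => x0).

Definition single_word (A : Type) (x : A) : oword A :=
  OWord (fun n => n = 0) (fun _ _ => False) (fun _ => x).

Definition word2 (A : Type) (x y : A) : oword A :=
  OWord (fun n => n = 0 \/ n = 1) (fun n m => n = 0 /\ m = 1)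
        (fun n => if n is 0 then x else y).

Definition map_oword (A B : Type) (f : A -> B) (u : oword A) : oword B :=
  OWord (odom u) (olt u) (fun n => f (olab u n)).

(* concatenation of an ordinal-indexed sequence of ordinal words
   (positions are pairs coded by the Cantor pairing, ordered lexicographically) *)
Definition flatten_oword (A : Type) (W : oword (oword A)) : oword A :=
  OWord (fun n => let (i, j) := of_nat n in odom W i /\ odom (olab W i) j)
        (fun n m => let (i, j) := of_nat n in let (i', j') := of_nat m in
                    olt W i i' \/ (i = i' /\ olt (olab W i) j j'))
        (fun n => let (i, j) := of_nat n in olab (olab W i) j).

Definition is_ordinal_monoid (M : Type) (pi : oword M -> M) : Prop :=
  (* pi is a map on ordinal words, i.e. invariant under isomorphism *)
  (forall u v, wf_oword u -> wf_oword v -> oword_iso u v -> pi u = pi v) /\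
  (forall x, pi (single_word x) = x) /\
  (forall W : oword (oword M), wf_oword W ->
     (forall i, odom W i -> wf_oword (olab W i)) ->
     pi (flatten_oword W) = pi (map_oword pi W)).

Definition is_partial_order (M : Type) (le : M -> M -> Prop) : Prop :=
  (forall x, le x x) /\
  (forall x y, le x y -> le y x -> x = y) /\
  (forall x y z, le x y -> le y z -> le x z).

Definition letterwise_le (M : Type) (le : M -> M -> Prop) (u v : oword M) : Prop :=
  (forall n, odom u n <-> odom v n) /\
  (forall n m, odom u n -> odom u m -> (olt u n m <-> olt v n m)) /\
  (forall n, odom u n -> le (olab u n) (olab v n)).

Definition is_ordered_ordinal_monoid (M : Type) (pi : oword M -> M)
    (le : M -> M -> Prop) : Prop :=
  is_ordinal_monoid pi /\ is_partial_order le /\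
  (forall u v, wf_oword u -> wf_oword v -> letterwise_le le u v -> le (pi u) (pi v)).

Definition om_one (M : Type) (pi : oword M -> M) (x0 : M) : M := pi (empty_word x0).
Definition om_mul (M : Type) (pi : oword M -> M) (x y : M) : M := pi (word2 x y).

Definition om_pow (M : Type) (pi : oword M -> M) (a : M) (n : nat) : M :=
  iter n (om_mul pi a) (om_one pi a).

Definition is_idem_power (M : Type) (pi : oword M -> M) (a v : M) : Prop :=
  (exists n, 0 < n /\ om_pow pi a n = v) /\ om_mul pi v v = v.

Definition is_idem_power_plus (M : Type) (pi : oword M -> M) (a : M) (k : nat)
    (v : M) : Prop :=
  exists N, forall n, N <= n -> om_pow pi a (n`! + k) = v.

Definition is_ordinal_monoid_with_merge (M : finType) (pi : oword M -> M)
    (le : M -> M -> Prop) (sharp : M -> M) : Prop :=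
  is_ordered_ordinal_monoid pi le /\
  (forall a b, le a b -> le (sharp a) (sharp b)) /\
  (forall a k v, is_idem_power_plus pi a k v -> le v (sharp a)) /\
  (forall a e, is_idem_power pi a e -> sharp e = e) /\
  (forall a, om_mul pi (sharp a) (sharp a) = sharp a) /\
  (forall a, sharp (sharp a) = sharp a) /\
  (forall a b, sharp (om_mul pi a b) =
               om_mul pi a (om_mul pi (sharp (om_mul pi b a)) b)).

Inductive cl_sharp (M : Type) (pi : oword M -> M) (sharp : M -> M)
    (A : M -> Prop) : M -> Prop :=
  | cl_base x : A x -> cl_sharp pi sharp A x
  | cl_mul x y : cl_sharp pi sharp A x -> cl_sharp pi sharp A y ->
                 cl_sharp pi sharp A (om_mul pi x y)
  | cl_sharp_op x : cl_sharp pi sharp A x -> cl_sharp pi sharp A (sharp x).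

Inductive fo_formula (M : Type) :=
  | FLt  : nat -> nat -> fo_formula M
  | FLab : M -> nat -> fo_formula M
  | FNot : fo_formula M -> fo_formula M
  | FAnd : fo_formula M -> fo_formula M -> fo_formula M
  | FEx  : nat -> fo_formula M -> fo_formula M.

Fixpoint fo_sat (M : Type) (u : oword M) (e : nat -> nat) (phi : fo_formula M)
    : Prop :=
  match phi with
  | FLt x y => olt u (e x) (e y)
  | FLab a x => olab u (e x) = a
  | FNot psi => ~ fo_sat u e psi
  | FAnd psi chi => fo_sat u e psi /\ fo_sat u e chi
  | FEx x psi => exists p, odom u p /\
                   fo_sat u (fun y => if y == x then p else e y) psi
  end.

Fixpoint fo_closed_in (M : Type) (bound : seq nat) (phi : fo_formula M) : Prop :=
  match phi with
  | FLt x y => x \in bound /\ y \in bound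
  | FLab _ x => x \in bound
  | FNot psi => fo_closed_in bound psi
  | FAnd psi chi => fo_closed_in bound psi /\ fo_closed_in bound chi
  | FEx x psi => fo_closed_in (x :: bound) psi
  end.

Definition fo_sentence (M : Type) (phi : fo_formula M) : Prop := fo_closed_in [::] phi.

Definition fo_definable (M : Type) (L : oword M -> Prop) : Prop :=
  exists phi : fo_formula M, fo_sentence phi /\
    forall u, wf_oword u -> (L u <-> fo_sat u (fun _ => 0) phi).

Definition fo_definable_map (M : Type) (L : oword M -> Prop) (rho : oword M -> M)
    : Prop :=
  forall m, fo_definable (fun u => L u /\ rho u = m).

Definition fo_approximant (M : Type) (pi : oword M -> M) (le : M -> M -> Prop)
    (L : oword M -> Prop) (Y : M -> Prop) (rho : oword M -> M) : Prop :=
  fo_definable_map L rho /\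
  (forall u, L u -> le (pi u) (rho u)) /\
  (forall u, L u -> Y (rho u)).

Definition a_plus (M : Type) (a : M) (u : oword M) : Prop :=
  wf_oword u /\
  (exists N, forall n, odom u n -> n < N) /\
  (exists n, odom u n) /\
  (forall n, odom u n -> olab u n = a).

(* Main.v *)
Require Import Defs.
From mathcomp Require Import all_boot.
From Stdlib Require Import Cantor Classical ClassicalEpsilon Wellfounded.
From mathcomp Require Import zify.

Set Implicit Arguments.
Unset Strict Implicit.
Unset Printing Implicit Defensive.


Lemma wf_pullback (A : Type) (u v : oword A) (f : nat -> nat) :
  wf_oword v ->
  (forall p, odom u p -> odom v (f p)) ->
  (forall p q, odom u p -> odom u q -> f p = f q -> p = q) ->
  (forall p q, odom u p -> odom u q -> (olt u p q <-> olt v (f p) (f q))) ->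
  wf_oword u.
Proof.
move=> [irr [tr [tot wfd]]] Hd Hi Hl.
split; [|split; [|split]].
- move=> p dp /(Hl _ _ dp dp). exact: irr (Hd _ dp).
- move=> p q r dp dq dr /(Hl _ _ dp dq) h1 /(Hl _ _ dq dr) h2.
  apply/(Hl _ _ dp dr). exact: tr (Hd _ dp) (Hd _ dq) (Hd _ dr) h1 h2.
- move=> p q dp dq. case: (tot _ _ (Hd _ dp) (Hd _ dq)) => [e|[h|h]].
  + by left; exact: Hi dp dq e.
  + by right; left; apply/(Hl _ _ dp dq).
  + by right; right; apply/(Hl _ _ dq dp).
- apply: (@Inclusion.wf_incl _ _ (fun p q => (fun x y => odom v x /\ odom v y /\ olt v x y) (f p) (f q))).
  + move=> p q [dp [dq h]]. split; [exact: Hd|split; [exact: Hd|]]. by apply/(Hl _ _ dp dq).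
  + exact: (Inverse_Image.wf_inverse_image _ _ _ f wfd).
Qed.

Lemma wf_two (A : Type) (L : nat -> A) :
  wf_oword (OWord (fun n => n = 0 \/ n = 1) (fun n m => n = 0 /\ m = 1) L).
Proof.
split; [|split; [|split]] => /=.
- by move=> p _ [-> ].
- by move=> p q r _ _ _ [_ ->] [].
- move=> p q [->|->] [->|->]; by [left|right;left|right;right|left].
- move=> n; constructor => y [_ [_ [-> _]]]; constructor => z [_ [_ [_ ]]] //.
Qed.

Lemma wf_single (A : Type) (x : A) : wf_oword (single_word x).
Proof.
split; [|split; [|split]] => /=.
- by move=> *.
- by move=> *.
- by move=> p q -> ->; left.
- by move=> n; constructor => y [_ [_ []]].
Qed.

Lemma wf_empty (A : Type) (x : A) : wf_oword (empty_word x).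
Proof.
split; [|split; [|split]] => /=.
- by move=> *.
- by move=> *.
- by move=> p q [].
- by move=> n; constructor => y [[]].
Qed.

Lemma exists_min (A : Type) (u : oword A) q0 : wf_oword u -> odom u q0 ->
  exists p, odom u p /\ forall q, odom u q -> q <> p -> olt u p q.
Proof.
move=> [irr [tr [tot wfd]]] dq0.
have: exists p, odom u p /\ forall q, odom u q -> ~ olt u q p.
  elim/(well_founded_ind wfd): q0 dq0 => q IH dq.
  case: (classic (exists r, odom u r /\ olt u r q)) => [[r [dr hr]]|nh].
  - exact: (IH r (conj dr (conj dq hr)) dr).
  - exists q; split=> // r dr hr; apply: nh; by exists r.
case=> p [dp hp]; exists p; split=> // q dq ne.
by case: (tot _ _ dp dq) => [e|[h|h]]; [case: ne| |case: (hp _ dq h)].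
Qed.

Definition remove (A : Type) (u : oword A) p :=
  OWord (fun q => odom u q /\ q <> p) (olt u) (olab u).

Lemma wf_remove (A : Type) (u : oword A) p : wf_oword u -> wf_oword (remove u p).
Proof.
move=> wu; apply: (@wf_pullback _ _ u id wu) => //=.
- by move=> q [].
Qed.

Fixpoint chainAbove (A : Type) (u : oword A) (q : nat) (k : nat) : Prop :=
  match k with 0 => True | k'.+1 => exists p, odom u p /\ olt u q p /\ chainAbove u p k' end.
Definition chainN (A : Type) (u : oword A) (k : nat) : Prop :=
  match k with 0 => True | k'.+1 => exists p, odom u p /\ chainAbove u p k' end.

Lemma chain_lift (A : Type) (u : oword A) p q k : wf_oword u ->
  olt u p q -> odom u p -> odom u q -> chainAbove u q k -> chainAbove u p k.
Proof.
move=> [irr [tr _]] pq dp dq; case: k => [|k] //= [r [dr [qr c]]].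
exists r; split=> //; split=> //; exact: tr pq qr.
Qed.

Lemma chainAbove_down (A : Type) (u : oword A) k q :
  chainAbove u q k.+1 -> chainAbove u q k.
Proof.
elim: k q => [|k IH] q //= [r [dr [qr c]]].
exists r; split=> //; split=> //; exact: IH.
Qed.

Lemma chainN_down (A : Type) (u : oword A) k : chainN u k.+1 -> chainN u k.
Proof.
case: k => [|k] //= [p [dp c]]; exists p; split=> //; exact: chainAbove_down.
Qed.

Lemma chainN_mono (A : Type) (u : oword A) m n : m <= n -> chainN u n -> chainN u m.
Proof.
elim: n => [|n IH]; first by rewrite leqn0 => /eqP ->.
rewrite leq_eqVlt => /orP [/eqP -> //|]; rewrite ltnS => h c.
exact: IH h (chainN_down c).
Qed.

Lemma chain_remove_above (A : Type) (u : oword A) p : wf_oword u -> odom u p ->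
  forall k q, olt u p q -> odom u q ->
  (chainAbove u q k <-> chainAbove (remove u p) q k).
Proof.
move=> [irr [tr _]] dp; elim=> [|k IH] q pq dq //=; split.
- move=> [r [dr [qr c]]]. have pr := tr _ _ _ dp dq dr pq qr.
  exists r; split; [split=> //|split=> //].
  + by move=> e; subst r; exact: irr dp pr.
  + by apply/IH.
- move=> [r [[dr ne] [qr c]]]. have pr := tr _ _ _ dp dq dr pq qr.
  exists r; split=> //; split=> //; by apply/IH.
Qed.

Lemma chain_remove (A : Type) (u : oword A) p : wf_oword u -> odom u p ->
  (forall q, odom u q -> q <> p -> olt u p q) ->
  forall k, chainN u k.+1 <-> chainN (remove u p) k.
Proof.
move=> wu dp pmin k.
have wu' := wu; case: wu' => [irr _].
have step1 : chainN u k.+1 <-> chainAbove u p k.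
  split=> /=; last by move=> c; exists p.
  move=> [q [dq c]]; case: (eqVneq q p) => [<- //|ne].
  apply: chain_lift wu (pmin _ dq _) dp dq c; by apply/eqP.
rewrite step1; clear step1; case: k => [|k] //=; split.
- move=> [q [dq [pq c]]]; exists q; split.
  + split=> // e; subst q; exact: irr dp pq.
  + by apply/(chain_remove_above wu dp).
- move=> [q [[dq ne] c]]; exists q; split=> //; split; first exact: pmin.
  by apply/(chain_remove_above wu dp) => //; exact: pmin.
Qed.


Lemma pi_pow (M : Type) (pi : oword M -> M) (a : M) :
  is_ordinal_monoid pi ->
  forall k (u : oword M), wf_oword u -> (forall n, odom u n -> olab u n = a) ->
  chainN u k -> ~ chainN u k.+1 -> pi u = om_pow pi a k.
Proof.
move=> [Hiso [Hsing Hass]]; elim=> [|k IH] u wu lab c nc.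
- rewrite /om_pow /= /om_one. apply: Hiso; [exact: wu|exact: wf_empty|].
  have nd : forall p, odom u p -> False by move=> p dp; apply: nc; exists p.
  exists id; split; [|split; [|split]].
  + by move=> p dp; case: (nd p dp).
  + by move=> q [].
  + by move=> p q dp; case: (nd p dp).
  + by move=> p dp; case: (nd p dp).
- have [q0 [dq0 _]] := c.
  have [p [dp pmin]] := exists_min wu dq0.
  have wu' : wf_oword (remove u p) := wf_remove p wu.
  have e' : pi (remove u p) = om_pow pi a k.
    apply: IH.
    + exact: wu'.
    + by move=> n [dn _]; exact: lab.
    + by apply/(chain_remove wu dp pmin).
    + by move/(chain_remove wu dp pmin).
  pose W := word2 (single_word a) (remove u p).
  have wW : wf_oword W := wf_two _.
  have wWl : forall i, odom W i -> wf_oword (olab W i).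
    by move=> i /= [->|->] /=; [exact: wf_single|exact: wu'].
  pose f := fun n => let (i, j) := of_nat n in if i is 0 then p else j.
  have [irr [trn [tot _]]] := wu.
  have Hfd : forall n, odom (flatten_oword W) n -> odom u (f n).
    move=> n; rewrite /f /=; case: (of_nat n) => i j /= [[->|->]] /=.
    + by move=> _.
    + by case.
  have Hfi : forall n m, odom (flatten_oword W) n -> odom (flatten_oword W) m ->
      f n = f m -> n = m.
    move=> n m; rewrite /f /=.
    case En: (of_nat n) => [i j]; case Em: (of_nat m) => [i' j'] /=.
    move=> [[?|?] hj] [[?|?] hj']; subst i i' => /= e; apply: of_nat_inj; rewrite En Em.
    + by rewrite hj hj'.
    + by case: hj' => _ ne; case: (ne (esym e)).
    + by case: hj => _ ne; case: (ne e).
    + by rewrite e.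
  have Hfl : forall n m, odom (flatten_oword W) n -> odom (flatten_oword W) m ->
      (olt (flatten_oword W) n m <-> olt u (f n) (f m)).
    move=> n m; rewrite /f /=.
    case: (of_nat n) => [i j]; case: (of_nat m) => [i' j'] /=.
    move=> [[?|?] hj] [[?|?] hj']; subst i i' => /=.
    + split; first by case=> [[_ h]|[_ []]].
      by move=> h; case: (irr _ dp h).
    + split=> _; last by left.
      by case: hj' => dj' ne; apply: pmin.
    + split; first by case=> [[h _]|[h _]].
      case: hj => dj ne h; exfalso.
      exact: (irr p dp (trn p j p dp dj dp (pmin _ dj ne) h)).
    + split; first by case=> [[h _]|[_ h]].
      by move=> h; right.
  have wF : wf_oword (flatten_oword W) := wf_pullback wu Hfd Hfi Hfl.
  have -> : pi u = pi (flatten_oword W).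
    symmetry; apply: Hiso; [exact: wF|exact: wu|]; exists f; split; [|split; [|split]].
    + exact: Hfd.
    + move=> q dq; case: (eqVneq q p) => [->|ne].
      * exists (to_nat (0, 0)); rewrite /f /flatten_oword; cbn [odom olab]; rewrite !cancel_of_to /=.
        by split=> //; split=> //; left.
      * exists (to_nat (1, q)); rewrite /f /flatten_oword; cbn [odom olab]; rewrite !cancel_of_to /=.
        by split=> //; split; [right|split=> //; apply/eqP].
    + exact: Hfl.
    + move=> n; rewrite /f /=; case: (of_nat n) => i j /= [[->|->]] /=.
      * by move=> _; apply: lab.
      * by [].
  rewrite (Hass W wW wWl).
  have -> : pi (map_oword pi W) = pi (word2 a (pi (remove u p))).
    apply: Hiso; [exact: (wf_two (fun n => pi (olab W n)))|exact: wf_two|].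
    exists id; split; [|split; [|split]] => //=.
    + by move=> q dq; exists q.
    + by move=> q [->|->] //=.
  by rewrite e'.
Qed.


Lemma chainAbove_list (A : Type) (u : oword A) : wf_oword u ->
  forall k q, odom u q -> chainAbove u q k ->
  exists l : seq nat, size l = k /\ uniq l /\ forall y, y \in l -> odom u y /\ olt u q y.
Proof.
move=> [irr [trn _]]; elim=> [|k IH] q dq /=.
- by move=> _; exists [::].
- move=> [r [dr [qr c]]]; have [l [sl [ul hl]]] := IH r dr c.
  exists (r :: l); split; first by rewrite /= sl.
  split.
  + rewrite /= ul andbT; apply/negP => /hl [_ h]; exact: irr dr h.
  + move=> y; rewrite inE => /orP [/eqP ->|/hl [dy hy]]; first by [].
    split=> //; exact: trn q r y dq dr dy qr hy.
Qed.

Lemma chainN_bound (A : Type) (u : oword A) N : wf_oword u ->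
  (forall n, odom u n -> n < N) -> ~ chainN u N.+1.
Proof.
move=> wu hN [p [dp c]].
have wu' := wu; case: wu' => [irr _].
have [l [sl [ul hl]]] := chainAbove_list wu dp c.
have U : uniq (p :: l).
  rewrite /= ul andbT; apply/negP => /hl [_ h]; exact: irr dp h.
have S : {subset p :: l <= iota 0 N}.
  move=> y; rewrite inE => /orP [/eqP ->|/hl [dy _]]; rewrite mem_iota /= add0n.
  - exact: hN.
  - exact: hN.
have := uniq_leq_size U S; rewrite /= sl size_iota; lia.
Qed.

Lemma exists_exact (A : Type) (u : oword A) n : ~ chainN u n ->
  exists k, chainN u k /\ ~ chainN u k.+1.
Proof.
elim: n => [|n IH] h; first by case: h.
case: (classic (chainN u n)) => hn; first by exists n.
exact: IH hn.
Qed.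

Lemma pigeon (T : finType) (g : T -> T) x :
  exists i P, 0 < P /\ iter (i + P) g x = iter i g x.
Proof.
apply: NNPP => H.
have inj : injective (fun k : 'I_(#|T|.+1) => iter k g x).
  move=> i j e; apply: val_inj => /=.
  case: (ltngtP i j) => h //.
  - exfalso; apply: H; exists i, (j - i); split; first by rewrite subn_gt0.
    by rewrite subnKC // ltnW.
  - exfalso; apply: H; exists j, (i - j); split; first by rewrite subn_gt0.
    by rewrite subnKC // ltnW.
have := leq_card _ inj; rewrite card_ord; lia.
Qed.

Lemma periodic (T : Type) (g : T -> T) x i P :
  iter (i + P) g x = iter i g x ->
  forall t n, i <= n -> iter (t * P + n) g x = iter n g x.
Proof.
move=> e.
have step : forall n, i <= n -> iter (n + P) g x = iter n g x.
  move=> n hn.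
  have -> : n + P = (n - i) + (i + P) by lia.
  by rewrite iterD e -iterD subnK.
elim=> [|t IH] n hn; first by rewrite mul0n add0n.
have -> : t.+1 * P + n = t * P + (n + P) by rewrite mulSn; lia.
rewrite IH; last by lia.
exact: step.
Qed.


Definition fTrue (M : Type) (a : M) : fo_formula M :=
  FNot (FAnd (FEx 0 (FLab a 0)) (FNot (FEx 0 (FLab a 0)))).
Definition fFalse (M : Type) (a : M) : fo_formula M := FNot (fTrue a).
Definition fOr (M : Type) (f g : fo_formula M) : fo_formula M :=
  FNot (FAnd (FNot f) (FNot g)).
Fixpoint fCh (M : Type) (a : M) (k x : nat) : fo_formula M :=
  match k with
  | 0 => fTrue a
  | k'.+1 => FEx x.+1 (FAnd (@FLt M x x.+1) (fCh a k' x.+1))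
  end.
Definition fChain (M : Type) (a : M) (k : nat) : fo_formula M :=
  match k with 0 => fTrue a | k'.+1 => FEx 0 (fCh a k' 0) end.
Definition fExact (M : Type) (a : M) (k : nat) : fo_formula M :=
  FAnd (fChain a k) (FNot (fChain a k.+1)).
Fixpoint fDisj (M : Type) (a : M) (f : nat -> fo_formula M) (n : nat) : fo_formula M :=
  match n with 0 => fFalse a | n'.+1 => fOr (fDisj a f n') (f n') end.
Definition fAllA (M : Type) (a : M) : fo_formula M := FNot (FEx 0 (FNot (FLab a 0))).
Definition fHasMax (M : Type) : fo_formula M := FEx 0 (FNot (FEx 1 (@FLt M 0 1))).
Definition fPred (M : Type) : fo_formula M :=
  FNot (FEx 0 (FAnd (FEx 1 (@FLt M 1 0))
    (FNot (FEx 1 (FAnd (@FLt M 1 0) (FNot (FEx 2 (FAnd (@FLt M 1 2) (@FLt M 2 0))))))))).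

Lemma sat_true (M : Type) (a : M) u e : fo_sat u e (fTrue a).
Proof. by move=> /= [h1 h2]; exact: h2 h1. Qed.

Lemma sat_false (M : Type) (a : M) u e : ~ fo_sat u e (fFalse a).
Proof. by move=> /= h; apply: h; exact: sat_true. Qed.

Lemma sat_or (M : Type) (f g : fo_formula M) u e :
  fo_sat u e (fOr f g) <-> fo_sat u e f \/ fo_sat u e g.
Proof.
rewrite /=; split.
- move=> h; apply: NNPP => h'; apply: h; split=> ?; apply: h'; by [left|right].
- by move=> [h|h] [h1 h2]; [apply: h1|apply: h2].
Qed.

Lemma sat_Ch (M : Type) (a : M) (u : oword M) : forall k x e,
  fo_sat u e (fCh a k x) <-> chainAbove u (e x) k.
Proof.
elim=> [|k IH] x e /=.
- by split=> // _; exact: sat_true.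
- have Ex : (x == x.+1) = false := ltn_eqF (ltnSn x).
  split.
  + move=> [p [dp [h1 h2]]]; exists p; split=> //.
    move: h1 h2; rewrite Ex eqxx => h1 h2; split=> //.
    by move: h2; rewrite IH /= eqxx.
  + move=> [p [dp [h1 h2]]]; exists p; split=> //.
    rewrite Ex eqxx; split=> //.
    by rewrite IH /= eqxx.
Qed.

Lemma sat_Chain (M : Type) (a : M) (u : oword M) k e :
  fo_sat u e (fChain a k) <-> chainN u k.
Proof.
case: k => [|k] /=.
- by split=> // _; exact: sat_true.
- split=> [[p [dp h]]|[p [dp h]]]; exists p; split=> //.
  + by move: h; rewrite sat_Ch /=.
  + by rewrite sat_Ch /=.
Qed.

Lemma sat_Disj (M : Type) (a : M) (u : oword M) f e n :
  fo_sat u e (fDisj a f n) <-> exists k, k < n /\ fo_sat u e (f k).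
Proof.
elim: n => [|n IH].
- split=> [h|[k [hk _]]] //; by case: (sat_false h).
- change (fo_sat u e (fOr (fDisj a f n) (f n)) <-> exists k, k < n.+1 /\ fo_sat u e (f k)).
  rewrite (sat_or (fDisj a f n) (f n)) IH; split.
  + move=> [[k [hk h]]|h]; [exists k; split=> //; lia|by exists n].
  + move=> [k [hk h]]; case: (ltngtP k n) => hkn.
    * by left; exists k.
    * lia.
    * by right; rewrite -hkn.
Qed.

Lemma closed_true (M : Type) (a : M) b : fo_closed_in b (fTrue a).
Proof. by rewrite /= inE eqxx. Qed.

Lemma closed_Ch (M : Type) (a : M) : forall k x b, x \in b -> fo_closed_in b (fCh a k x).
Proof.
elim=> [|k IH] x b hx /=; first exact: closed_true.
split; first by rewrite !inE hx eqxx orbT.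
apply: IH; exact: mem_head.
Qed.

Lemma closed_Chain (M : Type) (a : M) k b : fo_closed_in b (fChain a k).
Proof.
case: k => [|k] /=; first exact: closed_true.
apply: closed_Ch; exact: mem_head.
Qed.

Lemma closed_Disj (M : Type) (a : M) f b n :
  (forall k, fo_closed_in b (f k)) -> fo_closed_in b (fDisj a f n).
Proof.
move=> hf; elim: n => [|n IH] /=; first exact: closed_true.
by split.
Qed.


Definition HasMaxP (M : Type) (u : oword M) :=
  exists p, odom u p /\ ~ (exists q, odom u q /\ olt u p q).
Definition PredP (M : Type) (u : oword M) :=
  ~ (exists p, odom u p /\ (exists q, odom u q /\ olt u q p) /\
       ~ (exists q, odom u q /\ olt u q p /\
            ~ (exists r, odom u r /\ olt u q r /\ olt u r p))).

Lemma sat_HasMax (M : Type) (u : oword M) e : fo_sat u e (fHasMax M) <-> HasMaxP u.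
Proof. exact: iff_refl. Qed.
Lemma sat_Pred (M : Type) (u : oword M) e : fo_sat u e (fPred M) <-> PredP u.
Proof. exact: iff_refl. Qed.

Lemma fin_max (A : Type) (u : oword A) : wf_oword u ->
  forall N (S : nat -> Prop), (forall x, S x -> odom u x /\ x < N) -> (exists x, S x) ->
  exists m, S m /\ forall y, S y -> ~ olt u m y.
Proof.
move=> [irr [trn [tot _]]]; elim=> [|N IH] S hS [x Sx].
- by have [_ ] := hS x Sx.
- case: (classic (exists x, S x /\ x < N)) => [hx|nx].
  + have hS' : forall x, S x /\ x < N -> odom u x /\ x < N.
      by move=> z [Sz zN]; split=> //; have [] := hS z Sz.
    have [m' [[Sm' m'N] hm']] := IH (fun x => S x /\ x < N) hS' hx.
    have [dm' _] := hS m' Sm'.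
    case: (classic (S N)) => SN.
    * have [dN _] := hS N SN.
      case: (classic (olt u m' N)) => hmN.
      - exists N; split=> // y Sy hNy; have [dy yN] := hS y Sy.
        case: (ltngtP y N) => c.
        + exact: hm' y (conj Sy c) (trn m' N y dm' dN dy hmN hNy).
        + lia.
        + by subst y; exact: irr dN hNy.
      - exists m'; split=> // y Sy hy; have [dy yN] := hS y Sy.
        case: (ltngtP y N) => c.
        + exact: hm' y (conj Sy c) hy.
        + lia.
        + by subst y; exact: hmN hy.
    * exists m'; split=> // y Sy; have [dy yN] := hS y Sy; apply: hm'; split=> //.
      case: (ltngtP y N) => c //; first lia.
      by subst y.
  + have eN : forall y, S y -> y = N.
      move=> y Sy; have [_ yN] := hS y Sy; case: (ltngtP y N) => c //; last lia.
      by exfalso; apply: nx; exists y.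
    exists x; split=> // y Sy; rewrite (eN y Sy) (eN x Sx).
    have [dx _] := hS x Sx; rewrite (eN x Sx) in dx; exact: irr dx.
Qed.

Lemma fin_fwd (A : Type) (u : oword A) : wf_oword u ->
  (exists N, forall n, odom u n -> n < N) -> (exists n, odom u n) ->
  HasMaxP u /\ PredP u.
Proof.
move=> wu [N hN] [n dn]; split.
- have [m [dm hm]] := fin_max wu (S := odom u) (N := N) (fun x dx => conj dx (hN x dx))
     (ex_intro _ n dn).
  exists m; split=> // [[q [dq hq]]]; exact: hm q dq hq.
- move=> [p [dp [[q [dq hq]] nn]]].
  have [m [[dm mp] hm]] := fin_max wu (S := fun y => odom u y /\ olt u y p) (N := N)
     (fun x h => conj (proj1 h) (hN x (proj1 h))) (ex_intro _ q (conj dq hq)).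
  apply: nn; exists m; split=> //; split=> // [[r [dr [mr rp]]]].
  exact: hm r (conj dr rp) mr.
Qed.

Lemma fin_bwd (A : Type) (u : oword A) : wf_oword u ->
  HasMaxP u -> PredP u -> exists N, forall n, odom u n -> n < N.
Proof.
move=> [irr [trn [tot wfd]]] [mx [dmx hmx]] hP.
have key : forall x, odom u x -> exists N, forall q, odom u q -> (olt u q x \/ q = x) -> q < N.
  move=> x0; elim/(well_founded_ind wfd): x0 => x IH dx.
  case: (classic (exists y, odom u y /\ olt u y x)) => [hy|ny].
  - have [y [dy [yx hy']]] : exists y, odom u y /\ olt u y x /\
        ~ (exists z, odom u z /\ olt u y z /\ olt u z x).
      apply: NNPP => H; apply: hP; exists x; split=> //; split=> //.
    have [Ny hNy] := IH y (conj dy (conj dx yx)) dy.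
    exists (maxn Ny x.+1) => q dq [qx|->]; last lia.
    case: (tot q y dq dy) => [->|[qy|yq]].
    + have := hNy y dy (or_intror erefl); lia.
    + have := hNy q dq (or_introl qy); lia.
    + by exfalso; apply: hy'; exists q.
  - exists x.+1 => q dq [qx|->]; last lia.
    by exfalso; apply: ny; exists q.
have [N hN] := key mx dmx.
exists N => n dn; apply: hN => //.
case: (tot n mx dn dmx) => [->|[h|h]]; [by right|by left|].
by exfalso; apply: hmx; exists n.
Qed.


Lemma pow1 (M : Type) (pi : oword M -> M) (a : M) :
  is_ordinal_monoid pi -> om_pow pi a 1 = a.
Proof.
move=> Hm; have [_ [Hs _]] := Hm.
rewrite -(pi_pow Hm (u := single_word a)).
- exact: Hs.
- exact: wf_single.
- by [].
- by exists 0.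
- by move=> [p [_ [q [_ [[] _]]]]].
Qed.

Lemma cl_pow (M : Type) (pi : oword M -> M) sharp (a : M) k :
  is_ordinal_monoid pi -> 0 < k ->
  cl_sharp pi sharp (fun x => x = a) (om_pow pi a k).
Proof.
move=> Hm; case: k => [//|k] _; elim: k => [|k IH].
- by rewrite pow1 //; apply: cl_base.
- change (cl_sharp pi sharp (fun x => x = a) (om_mul pi a (om_pow pi a k.+1))).
  by apply: cl_mul => //; apply: cl_base.
Qed.

Theorem lemma5p7 (M : finType) (pi : oword M -> M) (le : M -> M -> Prop)
    (sharp : M -> M) :
  is_ordinal_monoid_with_merge pi le sharp ->
  forall a : M, exists rho : oword M -> M,
    fo_approximant pi le (a_plus a) (cl_sharp pi sharp (fun x => x = a)) rho.
Proof.
move=> [[Hmon [[Hrefl _] _]] [_ [Hplus _]]] a.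
have [I [P [P0 HIP]]] := pigeon (om_mul pi a) (om_one pi a).
have Hle : forall n, I <= n -> le (om_pow pi a n) (sharp a).
  move=> n hn; apply: (Hplus a n); exists P => j hj.
  have hd : P %| j`! by apply: dvdn_fact; rewrite P0 hj.
  rewrite /om_pow -(divnK hd); exact: periodic HIP _ _ hn.
have Hpow : forall u, a_plus a u ->
    exists k, 0 < k /\ chainN u k /\ ~ chainN u k.+1 /\ pi u = om_pow pi a k.
  move=> u [wu [[N hN] [[n dn] lab]]].
  have [k [ck nck]] := exists_exact (chainN_bound wu hN).
  exists k; split.
    case: k ck nck => [|k] // _ nck; exfalso; apply: nck; by exists n.
  split=> //; split=> //; exact: (pi_pow Hmon wu lab ck nck).
pose rho := fun u => if excluded_middle_informative (chainN u I) then sharp a else pi u.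
exists rho; split; [|split].
- move=> m.
  pose phi := FAnd (fAllA a) (FAnd (fHasMax M) (FAnd (fPred M) (FAnd (fChain a 1)
      (fOr (if sharp a == m then fChain a I else fFalse a)
           (fDisj a (fun k => if om_pow pi a k == m then fExact a k else fFalse a) I))))).
  exists phi; split.
  + rewrite /fo_sentence /phi.
    split; [by rewrite /= !inE|].
    split; [by rewrite /= !inE|].
    split; [by rewrite /= !inE|].
    split; [exact: (closed_Chain a 1 [::])|].
    split; [case: ifP => _; [exact: (closed_Chain a I [::])|exact: (closed_true a [::])]|].
    apply: closed_Disj => k; case: ifP => _;
      [split; [exact: (closed_Chain a k [::])|exact: (closed_Chain a k.+1 [::])]|exact: (closed_true a [::])].
  + move=> u wu; split.
    * move=> [hu e]; have hu' := hu; move: hu' => [_ [hfin [hne lab]]].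
      have [hM hP] := fin_fwd wu hfin hne.
      split; [|split; [exact/sat_HasMax|split; [exact/sat_Pred|split]]].
      - by move=> /= [p [dp hp]]; apply: hp; exact: lab.
      - by apply/sat_Chain; case: hne => n dn; exists n.
      - apply/sat_or; move: e; rewrite /rho; case: excluded_middle_informative => h /= e.
        + left; rewrite e eqxx; exact/sat_Chain.
        + right; apply/sat_Disj; have [k [k0 [ck [nck ek]]]] := Hpow u hu.
          exists k; split.
          * case: (leqP I k) => // hk; exfalso; apply: h; exact: chainN_mono hk ck.
          * rewrite -ek e eqxx; split; [exact/sat_Chain|move=> hc; apply: nck; exact: (proj1 (sat_Chain _ _ _ _) hc)].
    * move=> [hA [hM [hP [hC hO]]]].
      have hM' : HasMaxP u := hM; have hP' : PredP u := hP.
      have [n [dn _]] : chainN u 1 := proj1 (sat_Chain a u 1 (fun=> 0)) hC.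
      have lab : forall n, odom u n -> olab u n = a.
        move=> q dq; apply: NNPP => hq; apply: hA; exists q; split=> //.
      have hu : a_plus a u.
        split; first exact: wu.
        split; first exact: (fin_bwd wu hM' hP').
        split; [by exists n|exact: lab].
      split; first exact: hu.
      rewrite /rho; case: (proj1 (sat_or _ _ u (fun=> 0)) hO) => {}hO.
      + move: hO; case: eqP => [<- hI|_ hF]; last by case: (sat_false hF).
        have hI' : chainN u I := proj1 (sat_Chain a u I (fun=> 0)) hI.
        case: excluded_middle_informative => h //=; by case: (h hI').
      + have [k [hk hk']] := proj1 (sat_Disj a u _ (fun=> 0) I) hO.
        move: hk'; case: eqP => [<- [hc hn]|_ hF]; last by case: (sat_false hF).
        have ck : chainN u k := proj1 (sat_Chain a u k (fun=> 0)) hc.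
        have nck : ~ chainN u k.+1.
          by move=> c; apply: hn; exact: (proj2 (sat_Chain a u k.+1 (fun=> 0)) c).
        case: excluded_middle_informative => h.
        * exfalso; apply: nck; exact: chainN_mono h.
        * exact: (pi_pow Hmon wu lab ck nck).
- move=> u hu; rewrite /rho; case: excluded_middle_informative => h.
  + have [k [k0 [ck [nck ->]]]] := Hpow u hu.
    apply: Hle; case: (leqP I k) => // hk; exfalso; apply: nck.
    exact: chainN_mono h.
  + exact: Hrefl.
- move=> u hu; rewrite /rho; case: excluded_middle_informative => h.
  + apply: cl_sharp_op; exact: cl_base.
  + have [k [k0 [_ [_ ->]]]] := Hpow u hu; exact: cl_pow.
Qed.
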